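(* Let $\mathcal{M}$ be a test space and let $\mu\in\mathbb{W}$. Then $\|\mu\|_1=\sup\{\mu(a)-\mu(E\setminus a): E\in\mathcal{M},\ a\subseteq E\}$. Hence the norms $\|\cdot\|_{\mathcal{E}}$ and $\|\cdot\|_1$ on $\mathbb{W}$ are equivalent.
   Context: A test space is an irredundant collection $\mathcal{M}$ of nonempty sets (tests) with outcome set $X=\bigcup\mathcal{M}$; an event is a subset of a test. $\mathbb{W}$ is the space of functions $\mu:X\to\mathbb{R}$ such that $\|\mu\|_1:=\sup_{E\in\mathcal{M}}\sum_{x\in E}|\mu(x)|<\infty$ and there is a constant $c$ with $\sum_{x\in E}\mu(x)=c$ for all $E\in\mathcal{M}$. For an event $a$, $\mu(a)=\sum_{x\in a}\mu(x)$, and $\|\mu\|_{\mathcal{E}}=\sup\{|\mu(a)|: a \text{ an event}\}$. *)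

(* Defs.v *)
From HB Require Import structures.
From mathcomp Require Import all_boot all_order all_algebra.
From mathcomp Require Import all_classical all_reals.
From mathcomp Require Import ereal esum.
Set Implicit Arguments. Unset Strict Implicit. Unset Printing Implicit Defensive.
Import Order.TTheory GRing.Theory Num.Theory.
Local Open Scope classical_set_scope.
Local Open Scope ring_scope.

Definition test_space (X : Type) (M : set (set X)) : Prop :=
  [/\ (forall E, M E -> E !=set0),
      (forall E F, M E -> M F -> E `<=` F -> E = F) &
      (forall x : X, exists E, M E /\ E x)].

Definition abs_sum (X : choiceType) (R : realType) (A : set X) (mu : X -> R)
  : \bar R := (\esum_(x in A) (`|mu x|)%:E)%E.

(* sum of a real function over a set A, defined via positive and negative parts
   (meaningful when the absolute sum is finite) *)
Definition ssum (X : choiceType) (R : realType) (mu : X -> R) (A : set X) : R :=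
  fine (\esum_(x in A) (Num.max (mu x) 0)%:E)%E
  - fine (\esum_(x in A) (Num.max (- mu x) 0)%:E)%E.

Definition norm1 (X : choiceType) (R : realType) (M : set (set X)) (mu : X -> R)
  : \bar R := ereal_sup [set abs_sum E mu | E in M].

Definition event (X : Type) (M : set (set X)) (a : set X) : Prop :=
  exists2 E, M E & a `<=` E.

Definition normE (X : choiceType) (R : realType) (M : set (set X)) (mu : X -> R)
  : \bar R := ereal_sup [set (`|ssum mu a|)%:E | a in event M].

Definition inW (X : choiceType) (R : realType) (M : set (set X)) (mu : X -> R)
  : Prop :=
  (norm1 M mu < +oo)%E /\ exists c : R, forall E, M E -> ssum mu E = c.

(* Main.v *)
Require Import Defs.
From HB Require Import structures.
From mathcomp Require Import all_boot all_order all_algebra.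
From mathcomp Require Import all_classical all_reals.
From mathcomp Require Import ereal esum.
From mathcomp Require Import lra.
Import Order.TTheory GRing.Theory Num.Theory.
Local Open Scope classical_set_scope.
Local Open Scope ring_scope.

Set Implicit Arguments. Unset Strict Implicit.
Section Aux.
Variables (R : realType) (X : choiceType).

Lemma esum_sub {A B : set X} {g : X -> R} : A `<=` B -> (forall x, 0 <= g x) ->
  (\esum_(x in A) (g x)%:E <= \esum_(x in B) (g x)%:E)%E.
Proof.
move=> AB g0; rewrite (esum_mkcond A) (esum_mkcond B); apply: le_esum => i _.
case: ifPn => iA; first by rewrite ifT // inE; apply: AB; rewrite -inE.
by case: ifP => _ //; rewrite lee_fin.
Qed.

Lemma esum_restr {A B : set X} {g : X -> R} : A `<=` B ->
  (forall x, B x -> ~ A x -> g x = 0) ->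
  \esum_(x in B) (g x)%:E = \esum_(x in A) (g x)%:E.
Proof.
move=> AB g0; rewrite (esum_mkcond A) (esum_mkcond B); apply: eq_esum => i _.
case: ifPn => iB; case: ifPn => iA //.
  by rewrite g0 //; [rewrite -inE | move=> /mem_set; apply/negP].
by exfalso; move/negP: iB; apply; rewrite inE; apply: AB; rewrite -inE.
Qed.

Variable mu : X -> R.
Let pp x := Num.max (mu x) 0.
Let nn x := Num.max (- mu x) 0.
Let P A := (\esum_(x in A) (pp x)%:E)%E.
Let N A := (\esum_(x in A) (nn x)%:E)%E.

Lemma pp0 x : 0 <= pp x. Proof. by rewrite /pp le_max lexx orbT. Qed.
Lemma nn0 x : 0 <= nn x. Proof. by rewrite /nn le_max lexx orbT. Qed.

Lemma ssumE A : ssum mu A = fine (P A) - fine (N A).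
Proof. by []. Qed.

Lemma abs_sumE A : abs_sum A mu = (P A + N A)%E.
Proof.
rewrite /abs_sum /P /N -esumD; last 2 first.
- by move=> i _; rewrite lee_fin pp0.
- by move=> i _; rewrite lee_fin nn0.
apply: eq_esum => i _; rewrite -EFinD; congr (_%:E).
rewrite /pp /nn; case: (leP 0 (mu i)) => h.
  by rewrite (ger0_norm h) max_r ?addr0 // oppr_le0.
by rewrite (ltr0_norm h) max_l ?add0r // oppr_ge0 ltW.
Qed.

Lemma P0 A : (0 <= P A)%E.
Proof. by apply: esum_ge0 => x _; rewrite lee_fin pp0. Qed.
Lemma N0 A : (0 <= N A)%E.
Proof. by apply: esum_ge0 => x _; rewrite lee_fin nn0. Qed.

Section Fin.
Variable E : set X.
Hypothesis Hfin : (abs_sum E mu < +oo)%E.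

Lemma PE_fin {a : set X} : a `<=` E -> P a \is a fin_num.
Proof.
move=> aE; rewrite ge0_fin_numE ?P0 //; apply: le_lt_trans (esum_sub aE pp0) _.
apply: le_lt_trans Hfin; rewrite abs_sumE; exact: leeDl (N0 _).
Qed.
Lemma NE_fin {a : set X} : a `<=` E -> N a \is a fin_num.
Proof.
move=> aE; rewrite ge0_fin_numE ?N0 //; apply: le_lt_trans (esum_sub aE nn0) _.
apply: le_lt_trans Hfin; rewrite abs_sumE addeC; exact: leeDl (P0 _).
Qed.

Lemma abs_fin : abs_sum E mu = (fine (P E) + fine (N E))%:E.
Proof.
by rewrite abs_sumE EFinD !fineK ?PE_fin ?NE_fin.
Qed.

Lemma fP {a : set X} : a `<=` E -> 0 <= fine (P a) <= fine (P E).
Proof.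
move=> aE; rewrite fine_ge0 ?P0 //=; apply: fine_le; rewrite ?inE ?PE_fin //.
exact: esum_sub aE pp0.
Qed.
Lemma fN {a : set X} : a `<=` E -> 0 <= fine (N a) <= fine (N E).
Proof.
move=> aE; rewrite fine_ge0 ?N0 //=; apply: fine_le; rewrite ?inE ?NE_fin //.
exact: esum_sub aE nn0.
Qed.

Lemma up1 {a : set X} : a `<=` E ->
  ssum mu a - ssum mu (E `\` a) <= fine (P E) + fine (N E).
Proof.
move=> aE; rewrite !ssumE.
have DE : E `\` a `<=` E by move=> x [].
move: (fP aE) (fN aE) (fP DE) (fN DE) => /andP[? ?] /andP[? ?] /andP[? ?] /andP[? ?].
lra.
Qed.

Lemma up2 {a : set X} : a `<=` E -> `|ssum mu a| <= fine (P E) + fine (N E).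
Proof.
move=> aE; rewrite !ssumE.
move: (fP aE) (fN aE) => /andP[? ?] /andP[? ?].
rewrite ler_norml; apply/andP; split; lra.
Qed.

Definition a0 := E `&` [set x | 0 <= mu x].

Lemma a0E : a0 `<=` E. Proof. by move=> x []. Qed.

Lemma a0_eq : ssum mu a0 - ssum mu (E `\` a0) = fine (P E) + fine (N E).
Proof.
rewrite !ssumE.
have -> : P E = P a0.
  apply: esum_restr; first exact: a0E.
  move=> x Ex na; rewrite /pp max_r //; apply: ltW; rewrite ltNge; apply/negP.
  by move=> h; apply: na.
have -> : N a0 = 0%E.
  by apply: esum1 => x [_ /= h]; rewrite /nn max_r // oppr_le0.
have -> : P (E `\` a0) = 0%E.
  apply: esum1 => x [Ex na]; rewrite /pp max_r //; apply: ltW; rewrite ltNge.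
  by apply/negP => h; apply: na.
have -> : N E = N (E `\` a0).
  apply: esum_restr; first by move=> x [].
  move=> x Ex na; have [_ h] : a0 x.
    by apply: contrapT => h; apply: na.
  by rewrite /nn max_r // oppr_le0.
rewrite /=; lra.
Qed.

End Fin.
End Aux.
Unset Implicit Arguments. Set Strict Implicit.

Theorem lemmaC4 (R : realType) (X : choiceType) (M : set (set X)) :
  test_space M ->
  (forall mu : X -> R, inW M mu ->
     norm1 M mu =
     ereal_sup [set r | exists E a, [/\ M E, a `<=` E &
                  r = (ssum mu a - ssum mu (E `\` a))%:E]]) /\
  (exists k1 k2 : R, 0 < k1 /\ 0 < k2 /\
     forall mu : X -> R, inW M mu ->
       (normE M mu <= k1%:E * norm1 M mu)%E /\
       (norm1 M mu <= k2%:E * normE M mu)%E).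
Proof.
move=> _.
have fin : forall (mu : X -> R) E, inW M mu -> M E -> (abs_sum E mu < +oo)%E.
  move=> mu E [H _] ME; apply: le_lt_trans H.
  by apply: ereal_sup_ubound; exists E.
split.
  move=> mu Hw; apply/eqP; rewrite eq_le; apply/andP; split.
    apply: ge_ereal_sup => _ [E ME <-].
    have HE := fin mu E Hw ME.
    apply: ereal_sup_ubound; exists E, (a0 mu E); split. exact ME. exact: a0E.
    rewrite (a0_eq mu E). exact: (abs_fin HE).
  apply: ge_ereal_sup => _ [E [a [ME aE ->]]].
  have HE := fin mu E Hw ME.
  have HN : (abs_sum E mu <= norm1 M mu)%E by apply: ereal_sup_ubound; exists E.
  apply: (le_trans _ HN).
  rewrite (abs_fin HE) lee_fin; exact: (up1 HE aE).
exists 1, 2; split; first exact: ltr01. split; first exact: ltr0Sn.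
move=> mu Hw; split.
  rewrite mul1e; apply: ge_ereal_sup => _ [a [E ME aE] <-].
  have HE := fin mu E Hw ME.
  have HN : (abs_sum E mu <= norm1 M mu)%E by apply: ereal_sup_ubound; exists E.
  apply: (le_trans _ HN).
  rewrite (abs_fin HE) lee_fin; exact: (up2 HE aE).
apply: ge_ereal_sup => _ [E ME <-].
have HE := fin mu E Hw ME.
have h1 : ((`|ssum mu (a0 mu E)|)%:E <= normE M mu)%E.
  apply: ereal_sup_ubound; exists (a0 mu E); last reflexivity.
  exists E; [exact ME | exact: a0E].
have h2 : ((`|ssum mu (E `\` a0 mu E)|)%:E <= normE M mu)%E.
  apply: ereal_sup_ubound; exists (E `\` a0 mu E); last reflexivity.
  exists E; [exact ME | by move=> x []].
rewrite (abs_fin HE) -(a0_eq mu E).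
apply: le_trans (_ : ((`|ssum mu (a0 mu E)|)%:E + (`|ssum mu (E `\` a0 mu E)|)%:E <= _)%E).
  rewrite -EFinD lee_fin; apply: le_trans (ler_normB _ _); exact: ler_norm.
rewrite (mule_natl (normE M mu) 2) mule2n.
exact: leeD.
Qed.
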